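(* Every full triangle functor $F:\mathcal A\to\mathcal B$ between triangulated categories is objective.
   Context: $F$ is objective if every morphism $f$ in $\mathcal A$ with $F(f)=0$ factors through an object $K$ of $\mathcal A$ with $F(K)=0$. A triangle functor is a pair $(F,\xi)$ with $F$ additive and $\xi:F[1]\to[1]F$ a natural isomorphism such that $F$ sends distinguished triangles $(X,Y,Z,u,v,w)$ to distinguished triangles $(F(X),F(Y),F(Z),F(u),F(v),\xi_XF(w))$. *)

(* Defs.v *)
From mathcomp Require Import all_boot all_algebra.
Set Implicit Arguments. Unset Strict Implicit. Unset Printing Implicit Defensive.
Import GRing.Theory.
Local Open Scope ring_scope.

Record PreaddCat := {
  Obj :> Type;
  Hom : Obj -> Obj -> zmodType;
  idm : forall X, Hom X X;
  comp : forall X Y Z, Hom Y Z -> Hom X Y -> Hom X Z;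
  compA : forall X Y Z W (h : Hom Z W) (g : Hom Y Z) (f : Hom X Y),
    comp h (comp g f) = comp (comp h g) f;
  comp1m : forall X Y (f : Hom X Y), comp (idm Y) f = f;
  compm1 : forall X Y (f : Hom X Y), comp f (idm X) = f;
  compDl : forall X Y Z (g1 g2 : Hom Y Z) (f : Hom X Y),
    comp (g1 + g2) f = comp g1 f + comp g2 f;
  compDr : forall X Y Z (g : Hom Y Z) (f1 f2 : Hom X Y),
    comp g (f1 + f2) = comp g f1 + comp g f2
}.
Arguments Hom {p}.
Arguments idm {p}.
Arguments comp {p X Y Z}.

Definition is_iso (C : PreaddCat) (X Y : C) (f : Hom X Y) : Prop :=
  exists g : Hom Y X, comp g f = idm X /\ comp f g = idm Y.

Definition is_zero_obj (C : PreaddCat) (K : C) : Prop := idm K = 0.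

Record AddCat := {
  add_pre :> PreaddCat;
  zero_obj : add_pre;
  zero_objP : is_zero_obj zero_obj;
  biprodP : forall X Y : add_pre, exists (S : add_pre)
      (i1 : Hom X S) (i2 : Hom Y S) (p1 : Hom S X) (p2 : Hom S Y),
      [/\ comp p1 i1 = idm X, comp p2 i2 = idm Y, comp p1 i2 = 0,
          comp p2 i1 = 0 & comp i1 p1 + comp i2 p2 = idm S]
}.

Record AddFunctor (C D : PreaddCat) := {
  Fo : C -> D;
  Fm : forall X Y : C, Hom X Y -> Hom (Fo X) (Fo Y);
  Fm_id : forall X, Fm (idm X) = idm (Fo X);
  Fm_comp : forall X Y Z (g : Hom Y Z) (f : Hom X Y), Fm (comp g f) = comp (Fm g) (Fm f);
  Fm_add : forall X Y (f g : Hom X Y), Fm (f + g) = Fm f + Fm g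
}.
Arguments Fo {C D}.
Arguments Fm {C D} _ {X Y}.

Definition full_functor (C D : PreaddCat) (F : AddFunctor C D) : Prop :=
  forall (X Y : C) (g : Hom (Fo F X) (Fo F Y)), exists f : Hom X Y, Fm F f = g.

Definition faithful_functor (C D : PreaddCat) (F : AddFunctor C D) : Prop :=
  forall (X Y : C) (f g : Hom X Y), Fm F f = Fm F g -> f = g.

Definition ess_surj (C D : PreaddCat) (F : AddFunctor C D) : Prop :=
  forall Y : D, exists (X : C) (u : Hom (Fo F X) Y), is_iso u.

Definition equivalence (C D : PreaddCat) (F : AddFunctor C D) : Prop :=
  [/\ full_functor F, faithful_functor F & ess_surj F].

Record TriaCat := {
  tr_add :> AddCat;
  sh : AddFunctor tr_add tr_add;
  sh_equiv : equivalence sh;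
  dist : forall X Y Z : tr_add,
      Hom X Y -> Hom Y Z -> Hom Z (Fo sh X) -> Prop;
  TR1_iso : forall X Y Z X' Y' Z' (u : Hom X Y) (v : Hom Y Z) (w : Hom Z (Fo sh X))
      (u' : Hom X' Y') (v' : Hom Y' Z') (w' : Hom Z' (Fo sh X'))
      (a : Hom X X') (b : Hom Y Y') (c : Hom Z Z'),
      is_iso a -> is_iso b -> is_iso c ->
      comp b u = comp u' a -> comp c v = comp v' b ->
      comp (Fm sh a) w = comp w' c ->
      dist u v w -> dist u' v' w';
  TR1_id : forall X : tr_add,
      dist (idm X) (0 : Hom X (zero_obj tr_add)) (0 : Hom (zero_obj tr_add) (Fo sh X));
  TR1_ext : forall (X Y : tr_add) (u : Hom X Y),
      exists (Z : tr_add) (v : Hom Y Z) (w : Hom Z (Fo sh X)), dist u v w;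
  TR2 : forall X Y Z (u : Hom X Y) (v : Hom Y Z) (w : Hom Z (Fo sh X)),
      dist u v w <-> dist v w (- Fm sh u);
  TR3 : forall X Y Z X' Y' Z' (u : Hom X Y) (v : Hom Y Z) (w : Hom Z (Fo sh X))
      (u' : Hom X' Y') (v' : Hom Y' Z') (w' : Hom Z' (Fo sh X'))
      (a : Hom X X') (b : Hom Y Y'),
      dist u v w -> dist u' v' w' -> comp b u = comp u' a ->
      exists c : Hom Z Z', comp c v = comp v' b /\ comp (Fm sh a) w = comp w' c;
  TR4 : forall X Y Z Z' X' Y' (u : Hom X Y) (v : Hom Y Z)
      (j : Hom Y Z') (k : Hom Z' (Fo sh X))
      (l : Hom Z X') (i : Hom X' (Fo sh Y))
      (m : Hom Z Y') (n : Hom Y' (Fo sh X)),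
      dist u j k -> dist v l i -> dist (comp v u) m n ->
      exists (f : Hom Z' Y') (g : Hom Y' X'),
        [/\ dist f g (comp (Fm sh j) i),
            comp f j = comp m v, comp n f = k,
            comp g m = l & comp (Fm sh u) n = comp i g]
}.

Record TriaFunctor (A B : TriaCat) := {
  tF :> AddFunctor A B;
  xi : forall X : A, Hom (Fo tF (Fo (sh A) X)) (Fo (sh B) (Fo tF X));
  xi_nat : forall (X Y : A) (f : Hom X Y),
      comp (xi Y) (Fm tF (Fm (sh A) f)) = comp (Fm (sh B) (Fm tF f)) (xi X);
  xi_iso : forall X : A, is_iso (xi X);
  tF_dist : forall (X Y Z : A) (u : Hom X Y) (v : Hom Y Z) (w : Hom Z (Fo (sh A) X)),
      dist u v w -> dist (Fm tF u) (Fm tF v) (comp (xi X) (Fm tF w))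
}.

Definition objective (C D : PreaddCat) (F : AddFunctor C D) : Prop :=
  forall (X Y : C) (f : Hom X Y), Fm F f = 0 ->
    exists (K : C) (a : Hom X K) (b : Hom K Y),
      f = comp b a /\ is_zero_obj (Fo F K).

(* Main.v *)
Require Import Defs.
From mathcomp Require Import all_boot all_algebra.
Set Implicit Arguments. Unset Strict Implicit. Unset Printing Implicit Defensive.
Import GRing.Theory.
Local Open Scope ring_scope.
Local Notation Hom := Defs.Hom.
Local Notation comp := Defs.comp.
Local Notation idm := Defs.idm.
Local Notation Fm := Defs.Fm.
Local Notation Fo := Defs.Fo.
Local Notation compA := Defs.compA.

Lemma comp0r (C : PreaddCat) (X Y Z : C) (g : Hom Y Z) : comp g (0 : Hom X Y) = 0.
Proof. apply: (@addrI _ (comp g 0)); by rewrite -compDr !addr0. Qed.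
Lemma comp0l (C : PreaddCat) (X Y Z : C) (f : Hom X Y) : comp (0 : Hom Y Z) f = 0.
Proof. apply: (@addrI _ (comp 0 f)); by rewrite -compDl !addr0. Qed.
Lemma compNr (C : PreaddCat) (X Y Z : C) (g : Hom Y Z) (f : Hom X Y) :
  comp g (- f) = - comp g f.
Proof. apply/eqP; by rewrite -addr_eq0 -compDr addNr comp0r. Qed.
Lemma compNl (C : PreaddCat) (X Y Z : C) (g : Hom Y Z) (f : Hom X Y) :
  comp (- g) f = - comp g f.
Proof. apply/eqP; by rewrite -addr_eq0 -compDl addNr comp0l. Qed.
Lemma Fm0 (C D : PreaddCat) (F : AddFunctor C D) (X Y : C) : Fm F (0 : Hom X Y) = 0.
Proof. apply: (@addrI _ (Fm F 0)); by rewrite -Fm_add !addr0. Qed.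
Lemma FmN (C D : PreaddCat) (F : AddFunctor C D) (X Y : C) (f : Hom X Y) :
  Fm F (- f) = - Fm F f.
Proof. apply/eqP; by rewrite -addr_eq0 -Fm_add addNr Fm0. Qed.
Lemma iso_id (C : PreaddCat) (X : C) : is_iso (idm X).
Proof. exists (idm X); by rewrite comp1m. Qed.

Section Tri.
Variable T : TriaCat.

Lemma L1 (X Y Z : T) (u : Hom X Y) (v : Hom Y Z) (w : Hom Z (Fo (sh T) X)) :
  dist u v w -> comp v u = 0.
Proof.
move=> d.
have [c [Hc _]] := TR3 (TR1_id X) d (a := idm X) (b := u) erefl.
by rewrite comp0r in Hc.
Qed.

Lemma zero_tri (W : T) :
  dist (0 : Hom (zero_obj T) W) (idm W) (0 : Hom W (Fo (sh T) (zero_obj T))).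
Proof.
apply/TR2; rewrite Fm0 oppr0.
apply: (TR1_iso (a := idm W) (b := idm W) (c := 0) _ _ _ _ _ _ (TR1_id W)).
- exact: iso_id.
- exact: iso_id.
- exists 0; split; first by rewrite comp0r zero_objP.
  by rewrite comp0r -Fm_id zero_objP Fm0.
- by [].
- by rewrite comp0r comp0l.
- by rewrite !comp0r.
Qed.

Lemma L2 (X Y Z W : T) (u : Hom X Y) (v : Hom Y Z) (w : Hom Z (Fo (sh T) X))
  (g : Hom Y W) : dist u v w -> comp g u = 0 -> exists g', g = comp g' v.
Proof.
move=> d Hg.
have [c [Hc _]] := TR3 d (zero_tri W) (a := 0) (b := g) ltac:(by rewrite Hg comp0r).
by exists c; rewrite Hc comp1m.
Qed.

Lemma L3 (X Y Z W : T) (u : Hom X Y) (v : Hom Y Z) (w : Hom Z (Fo (sh T) X))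
  (g : Hom W Y) : dist u v w -> comp v g = 0 -> exists g', g = comp u g'.
Proof.
move=> d Hg.
have d1 := proj1 (TR2 _ _ _) (TR1_id W).
have d2 := proj1 (TR2 _ _ _) d.
have [c [_ Hc]] := TR3 d1 d2 (a := g) (b := 0) ltac:(by rewrite Hg comp0r).
rewrite compNr compNl Fm_id compm1 in Hc.
move/oppr_inj: Hc => Hc.
have [fu _ _] := sh_equiv T.
have [g' Hg'] := fu _ _ c.
exists g'.
have [_ fa _] := sh_equiv T.
apply: fa; by rewrite Fm_comp Hg' Hc.
Qed.

Lemma L5 (X Y Z : T) (u : Hom X Y) (v : Hom Y Z) (w : Hom Z (Fo (sh T) X)) :
  dist u v w -> is_iso v -> idm X = 0.
Proof.
move=> d [vi [H1 H2]].
have u0 : u = 0.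
  by rewrite -(comp1m u) -H1 -compA (L1 d) comp0r.
have d2 := proj1 (TR2 _ _ _) d.
have w0 : w = 0.
  by rewrite -(compm1 w) -H2 compA (L1 d2) comp0l.
have d3 := proj1 (TR2 _ _ _) d2.
have [g' Hg'] := L2 (g := idm (Fo (sh T) X)) d3 ltac:(by rewrite w0 comp0r).
rewrite u0 Fm0 oppr0 comp0r in Hg'.
have [_ fa _] := sh_equiv T.
apply: fa; by rewrite Fm_id Fm0.
Qed.

Lemma L4 (Y Z : T) (v : Hom Y Z) :
  exists (X : T) (u : Hom X Y) (w : Hom Z (Fo (sh T) X)), dist u v w.
Proof.
have [P [p [q d]]] := TR1_ext v.
have [fu fa es] := sh_equiv T.
have [X [al [ali [Ha1 Ha2]]]] := es P.
have [u0 Hu0] := fu _ _ (comp q al).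
exists X, (- u0), (comp ali p).
apply/TR2; rewrite FmN opprK.
apply: (TR1_iso (a := idm Y) (b := idm Z) (c := ali) _ _ _ _ _ _ d).
- exact: iso_id.
- exact: iso_id.
- by exists al.
- by rewrite comp1m compm1.
- by rewrite compm1.
- by rewrite Fm_id comp1m Hu0 -compA Ha2 compm1.
Qed.
End Tri.

Theorem mainTheorem9 (A B : TriaCat) (F : TriaFunctor A B) :
  full_functor F -> objective F.
Proof.
move=> full X Y f Hf.
have [Z [v [w d]]] := TR1_ext f.
have dB := tF_dist F d.
have [t Ht] := L2 (g := idm (Fo F Y)) dB ltac:(by rewrite Hf comp0r).
have [t0 Ht0] := full _ _ t.
set h := comp t0 v.
have Fh : Fm F h = idm (Fo F Y) by rewrite /h Fm_comp Ht0 -Ht.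
have hf : comp h f = 0 by rewrite /h -compA (L1 d) comp0r.
have [K [k [w' d']]] := L4 h.
have [g' Hg'] := L3 d' hf.
exists K, g', k; split => //.
have dB' := tF_dist F d'.
apply: (L5 dB'); rewrite Fh; exact: iso_id.
Qed.
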